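(* Let $H$ be a non-trivial connected core. Then there exist a graph $F$ and vertices $u^*,v^*\in V(F)$ such that (a) for all distinct $x,y\in V(H)$ there is a homomorphism $f\colon F\to H$ with $f(u^* )=x$ and $f(v^* )=y$, and (b) every homomorphism $f\colon F\to H$ satisfies $f(u^* )\ne f(v^* )$, if and only if $H$ is projective.
   Context: Graphs are finite, undirected, without parallel edges, loops allowed; $K_1^*$ is the one-vertex graph with a loop. A homomorphism is an edge-preserving vertex map. A core is a graph with no homomorphism to a proper subgraph of itself; it is trivial if isomorphic to $K_1$, $K_1^*$ or $K_2$, non-trivial otherwise. The direct product $H_1\times H_2$ has vertex set $V(H_1)\times V(H_2)$ with $(x_1,y_1)(x_2,y_2)$ an edge iff $x_1x_2\in E(H_1)$ and $y_1y_2\in E(H_2)$; $H^m$ is the $m$-fold product and $\pi_i(x_1,\dots,x_m)=x_i$. A homomorphism $f\colon H^m\to H$ is idempotent if $f(x,\dots,x)=x$ for all $x$. $H$ is projective if for every $m\ge2$ every idempotent homomorphism $H^m\to H$ equals some $\pi_i$. One may use the theorem of Larose and Tardif: a graph with at least three vertices is projective iff every subset $C\subseteq V(H)$ is constructible, where $C$ is constructible if there are a graph $K$, vertices $x_0,\dots,x_\ell\in V(K)$ and $y_1,\dots,y_\ell\in V(H)$ such that $C=\{y\in V(H):\exists f\colon K\to H \text{ with } f(x_i)=y_i\ (i\in[\ell]) \text{ and } f(x_0)=y\}$. *)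

(* Defs.v *)
From mathcomp Require Import all_boot.
Set Implicit Arguments. Unset Strict Implicit. Unset Printing Implicit Defensive.

(* A finite undirected graph without parallel edges, loops allowed:
   a finite vertex type with a symmetric adjacency relation
   (adj x x = true means a loop at x). *)
Record graph := Graph {
  vert :> finType;
  adj : rel vert;
  adj_sym : symmetric adj
}.

Definition hom (G H : graph) (f : G -> H) : Prop :=
  forall x y : G, adj x y -> adj (f x) (f y).

Definition iso (G H : graph) (f : G -> H) : Prop :=
  bijective f /\ forall x y : G, adj (f x) (f y) = adj x y.

Definition isomorphic (G H : graph) : Prop := exists f : G -> H, iso f.

(* A subgraph of H: vertex set S and edge relation E contained in adj,
   restricted to S, symmetric.  It is proper if S <> V(H) or E <> E(H).
   H is a core if it admits no homomorphism to a proper subgraph. *)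
Definition is_core (H : graph) : Prop :=
  forall (S : {set H}) (E : rel H),
    symmetric E ->
    (forall x y, E x y -> [&& x \in S, y \in S & adj x y]) ->
    (exists f : H -> H, (forall x, f x \in S) /\
        (forall x y, adj x y -> E (f x) (f y))) ->
    S = setT /\ (forall x y, E x y = adj x y).

Definition K1 : graph := @Graph unit (fun _ _ => false) (fun _ _ => erefl).
Definition K1star : graph := @Graph unit (fun _ _ => true) (fun _ _ => erefl).
Lemma K2_sym : symmetric (fun x y : bool => x != y).
Proof. by move=> x y; rewrite eq_sym. Qed.
Definition K2 : graph := @Graph bool (fun x y => x != y) K2_sym.

Definition trivial_graph (H : graph) : Prop :=
  isomorphic H K1 \/ isomorphic H K1star \/ isomorphic H K2.

Definition connected (H : graph) : Prop :=
  0 < #|H| /\ forall x y : H, connect (@adj H) x y.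

Lemma pow_adj_sym (H : graph) (m : nat) :
  symmetric (fun x y : {ffun 'I_m -> H} => [forall i, adj (x i) (y i)]).
Proof.
move=> x y; apply/forallP/forallP => h i; by rewrite adj_sym.
Qed.

Definition graph_pow (H : graph) (m : nat) : graph :=
  @Graph {ffun 'I_m -> H} _ (@pow_adj_sym H m).

Definition idempotent_hom (H : graph) (m : nat) (f : graph_pow H m -> H) : Prop :=
  hom f /\ forall x : H, f ([ffun => x] : graph_pow H m) = x.

Definition projective (H : graph) : Prop :=
  forall m : nat, 2 <= m -> forall f : graph_pow H m -> H,
    idempotent_hom f -> exists i : 'I_m, forall x : graph_pow H m, f x = x i.

(* Main.v *)
Require Import Defs.
From mathcomp Require Import all_boot all_fingroup.
From Stdlib Require Import ClassicalEpsilon Classical.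
Set Implicit Arguments. Unset Strict Implicit. Unset Printing Implicit Defensive.

Lemma loop_core (H : graph) (v : H) : is_core H -> adj v v -> forall x : H, x = v.
Proof.
move=> Hc Hvv x.
pose E := fun x y : H => (x == v) && (y == v).
have E1 : symmetric E by move=> p q; rewrite /E andbC.
have E2 : forall p q, E p q -> [&& p \in [set v], q \in [set v] & adj p q].
  by move=> p q /andP[/eqP-> /eqP->]; rewrite !inE eqxx Hvv.
have E3 : exists f : H -> H, (forall p, f p \in [set v]) /\
        (forall p q, adj p q -> E (f p) (f q)).
  by exists (fun _ => v); split=> [p|p q _]; rewrite ?inE /E ?eqxx.
have [HS _] := Hc _ _ E1 E2 E3.
by move: (in_setT x); rewrite -HS inE => /eqP.
Qed.

Lemma two_cases (H : graph) (a b x : H) : ((x != a) && (x != b)) = false -> x = a \/ x = b.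
Proof. by case: eqP => [->|_]; [left | case: eqP => [->|//]; right]. Qed.

Lemma three_vertices (H : graph) : connected H -> is_core H -> ~ trivial_graph H ->
  exists a b c : H, [/\ a != b, b != c & a != c].
Proof.
move=> [Hn Hconn] Hc Hnt.
have /card_gt0P [a _] := Hn.
case: (pickP (fun x : H => x != a)) => [b Hb | Hall]; last first.
  have Ha x : x = a by apply/eqP; move: (Hall x) => /negbFE.
  exfalso; apply: Hnt.
  case Haa: (adj a a); [right; left | left]; exists (fun _ => tt); split.
  - by exists (fun _ => a) => [x|[]] //; rewrite (Ha x).
  - by move=> x y; rewrite (Ha x) (Ha y) Haa.
  - by exists (fun _ => a) => [x|[]] //; rewrite (Ha x).
  - by move=> x y; rewrite (Ha x) (Ha y) Haa.
case: (pickP (fun x : H => (x != a) && (x != b))) => [c /andP[Hca Hcb] | Hall].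
  by exists a, b, c; split; rewrite // eq_sym.
have Hx x : x = a \/ x = b by apply: two_cases; apply: Hall.
exfalso; apply: Hnt; right; right.
have Hab : adj a b.
  apply: contraT => Hab.
  have Hcl : closed (@adj H) (pred1 a).
    move=> x y Hxy; case: (Hx x) Hxy => ->; case: (Hx y) => -> Hxy //=;
    exfalso; move: Hab; rewrite ?Hxy // adj_sym Hxy //.
  have := closed_connect Hcl (Hconn a b).
  by rewrite !inE eqxx (negbTE Hb).
have Haa : adj a a = false.
  by apply/negP => /(loop_core Hc) /(_ b) /eqP; rewrite (negbTE Hb).
have Hbb : adj b b = false.
  by apply/negP => /(loop_core Hc) /(_ a) /eqP; rewrite eq_sym (negbTE Hb).
exists (fun x => x == a); split.
  exists (fun y : bool => if y then a else b) => [x|[]] /=; last by rewrite (negbTE Hb).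
  - by case: (Hx x) => ->; rewrite ?eqxx ?(negbTE Hb).
  - by rewrite eqxx.
move=> x y /=; case: (Hx x) => ->; case: (Hx y) => ->;
  rewrite ?eqxx ?(negbTE Hb) ?Haa ?Hbb ?Hab //= adj_sym Hab //.
Qed.

Definition tup (H : graph) m (I : {set 'I_m}) (u v : H) : graph_pow H m :=
  [ffun i => if i \in I then u else v].

Definition win (H : graph) m (f : graph_pow H m -> H) (I : {set 'I_m}) :=
  [forall u : H, forall v : H, (u != v) ==> (f (tup I u v) == u)].

Lemma winP (H : graph) m (f : graph_pow H m -> H) I :
  win f I -> forall u v, u != v -> f (tup I u v) = u.
Proof. by move=> /forallP W u v Huv; move/forallP/(_ v)/implyP/(_ Huv)/eqP: (W u). Qed.

Lemma bin (H : graph) (g : H -> H -> H) (u0 v0 : H) :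
  (forall u v, g u v = u \/ g u v = v) ->
  (forall u v u' v', u != u' -> v != v' -> g u v != g u' v') ->
  u0 != v0 -> g u0 v0 = u0 -> forall u v, u != v -> g u v = u.
Proof.
move=> Hc Hn Huv0 Hg.
have S1 x : x != u0 -> g x u0 = x.
  move=> Hx; case: (Hc x u0) => // E.
  by have := Hn x u0 u0 v0 Hx Huv0; rewrite E Hg eqxx.
move=> u v Huv; case: (eqVneq v u0) => [E|Hv]; first by rewrite E; apply: S1; rewrite -E.
case: (Hc u v) => // E.
by have := Hn u v v u0 Huv Hv; rewrite E S1 // eqxx.
Qed.

Lemma gadget_proj (H : graph) (a b c : H) : a != b -> b != c -> a != c ->
  (exists (F : graph) (u v : F),
      (forall x y : H, x != y ->
         exists f : F -> H, hom f /\ f u = x /\ f v = y) /\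
      (forall f : F -> H, hom f -> f u != f v)) -> projective H.
Proof.
move=> Hab Hbc Hac [F [u [v [Ga Gb]]]] m Hm f [Hf Hid].
have NP : forall x y : graph_pow H m, (forall i, x i != y i) -> f x != f y.
  move=> x y Hxy.
  pose G i := proj1_sig (constructive_indefinite_description _ (Ga _ _ (Hxy i))).
  have GP i := proj2_sig (constructive_indefinite_description _ (Ga _ _ (Hxy i))).
  pose g := fun w : F => ([ffun i => G i w] : graph_pow H m).
  have hg : hom g.
    move=> p q Hpq; apply/forallP => i; rewrite !ffunE; exact: (GP i).1 _ _ Hpq.
  have -> : x = g u by apply/ffunP => i; rewrite ffunE /G (GP i).2.1.
  have -> : y = g v by apply/ffunP => i; rewrite ffunE /G (GP i).2.2.
  by apply: (Gb (fun w => f (g w))) => p q Hpq; apply: Hf; apply: hg.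
have CONS : forall x, exists i, f x = x i.
  move=> x; apply: NNPP => Hn.
  suff : f x != f [ffun => f x] by rewrite Hid eqxx.
  apply: NP => i; rewrite ffunE; apply/eqP => E; apply: Hn; by exists i.
have L : forall W (x : graph_pow H m) (val e : H), win f W -> val != e ->
    (forall i, i \in W -> x i != val) -> (forall i, i \notin W -> x i != e) ->
    f x != val.
  move=> W x val e HW Hve H1 H2.
  rewrite -[X in _ != X](winP HW Hve); apply: NP => i; rewrite ffunE.
  by case: ifP => Hi; [exact: H1 | apply: H2; rewrite Hi].
have EX : forall x : graph_pow H m, (forall i, x i \in [:: a; b; c]) ->
    f x != a -> f x != b -> f x != c -> False.
  move=> x Hx Na Nb Nc; case: (CONS x) => i Ei; move: (Hx i); rewrite !inE -Ei.
  by rewrite (negbTE Na) (negbTE Nb) (negbTE Nc).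
have WI : forall I u0 v0, u0 != v0 -> f (tup I u0 v0) = u0 -> win f I.
  move=> I u0 v0 Huv0 E.
  apply/forallP => p; apply/forallP => q; apply/implyP => Hpq; apply/eqP.
  apply: (bin (g := fun p q => f (tup I p q))) Huv0 E p q Hpq => [p' q'|p' q' p'' q'' H1 H2].
    by case: (CONS (tup I p' q')) => i ->; rewrite ffunE; case: ifP; [left|right].
  by apply: NP => i; rewrite !ffunE; case: ifP.
have COMP : forall I, win f I \/ win f (~: I).
  move=> I; case: (CONS (tup I a b)) => i; rewrite ffunE; case: ifP => _ E.
    by left; apply: (WI I a b Hab).
  right; apply: (WI (~: I) b a); first by rewrite eq_sym.
  rewrite -[RHS]E; congr f; apply/ffunP => k; rewrite !ffunE inE.
  by case: (k \in I).
have WT : win f setT.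
  apply/forallP => p; apply/forallP => q; apply/implyP => _.
  suff -> : tup [set: 'I_m] p q = [ffun => p] by rewrite Hid.
  by apply/ffunP => i; rewrite !ffunE inE.
have W0 : ~~ win f set0.
  apply/negP => /winP /(_ a b Hab).
  suff -> : tup (set0 : {set 'I_m}) a b = [ffun => b] by rewrite Hid; apply/eqP; rewrite eq_sym.
  by apply/ffunP => i; rewrite !ffunE inE.
have UP : forall P I : {set 'I_m}, win f P -> P \subset I -> win f I.
  move=> P I HP HPI; case: (COMP I) => // HI; exfalso.
  pose x : graph_pow H m := [ffun i => if i \in P then a else if i \in I then b else c].
  have xP i : i \in P -> x i = a by rewrite ffunE => ->.
  have xQ i : i \notin P -> i \in I -> x i = b by rewrite ffunE => /negbTE -> ->.
  have xS i : i \notin I -> x i = c.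
    move=> iI; rewrite ffunE (negbTE iI); case: ifP => // iP.
    by move: iI; rewrite (subsetP HPI _ iP).
  apply: (EX x).
  - by move=> i; rewrite ffunE !inE; case: ifP => _; [|case: ifP => _]; rewrite eqxx ?orbT.
  - apply: (L (~: I) x a c HI Hac) => i; rewrite inE => iI.
      by rewrite xS // eq_sym.
    by case: (boolP (i \in P)) => iP; [rewrite xP // | rewrite xQ //; rewrite negbK in iI].
  - apply: (L P x b a HP); first by rewrite eq_sym.
      by move=> i /xP ->.
    move=> i iP; case: (boolP (i \in I)) => iI; first by rewrite xQ // eq_sym.
    by rewrite xS // eq_sym.
  - apply: (L P x c a HP); first by rewrite eq_sym.
      by move=> i /xP ->.
    move=> i iP; case: (boolP (i \in I)) => iI; first by rewrite xQ // eq_sym.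
    by rewrite xS // eq_sym.
case: (arg_minnP (fun M : {set 'I_m} => #|M|) WT) => M HM Mmin.
have /set0Pn [j jM] : M != set0 by apply: contraNneq W0 => <-.
have J : forall I : {set 'I_m}, j \in I -> win f I.
  case: (eqVneq (M :\ j) set0) => [E | NE].
    move=> I jI; apply: (UP M I HM); apply/subsetP => i iM.
    case: (eqVneq i j) => [-> // | ne].
    have : i \in M :\ j by rewrite !inE ne iM.
    by rewrite E inE.
  exfalso.
  have cM : #|M| = (#|M :\ j|).+1 by rewrite (cardsD1 j M) jM.
  have n1 : ~~ win f [set j].
    apply/negP => W1; have := Mmin _ W1; rewrite cards1 cM ltnS leqn0.
    by rewrite -card_gt0 in NE; rewrite eqn0Ngt NE.
  have n2 : ~~ win f (M :\ j).
    by apply/negP => W2; have := Mmin _ W2; rewrite cM ltnn.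
  have c1 : win f (~: [set j]) by case: (COMP [set j]) => // h; rewrite h in n1.
  have c2 : win f (~: (M :\ j)) by case: (COMP (M :\ j)) => // h; rewrite h in n2.
  pose x : graph_pow H m := [ffun i => if i == j then a else if i \in M then b else c].
  apply: (EX x).
  - by move=> i; rewrite ffunE !inE; case: ifP => _; [|case: ifP => _]; rewrite eqxx ?orbT.
  - apply: (L _ x a b c1 Hab) => i; rewrite !inE ffunE.
      by move=> /negbTE ->; case: ifP => _; rewrite 1?eq_sym.
    by rewrite negbK => ->.
  - apply: (L _ x b a c2); first by rewrite eq_sym.
      move=> i; rewrite !inE ffunE negb_and negbK.
      by case: eqP => //= _ /negbTE ->; rewrite eq_sym.
    move=> i; rewrite !inE ffunE negbK => /andP[/negbTE -> ->].
    by rewrite eq_sym.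
  - apply: (L M x c a HM); first by rewrite eq_sym.
      by move=> i iM; rewrite ffunE iM; case: ifP.
    move=> i iM; have nij : i != j by apply: contraNneq iM => ->.
    by rewrite ffunE (negbTE iM) (negbTE nij) eq_sym.
exists j => x; apply/eqP; apply: contraT => Hne.
pose e := if f x == a then b else a.
have He : f x != e by rewrite /e; case: (eqVneq (f x) a) => [E|N]; [rewrite E | exact: N].
have jW : j \in [set i | x i != f x] by rewrite inE eq_sym.
have := L _ x (f x) e (J _ jW) He; rewrite eqxx; apply.
  by move=> i; rewrite inE.
by move=> i; rewrite inE negbK => /eqP ->.
Qed.

Lemma core_endo_inj (H : graph) : is_core H -> forall s : H -> H, hom s -> injective s.
Proof.
move=> Hc s hs.
pose S := s @: [set: H].
pose E := fun x y : H => [&& x \in S, y \in S & adj x y].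
have E1 : symmetric E.
  by move=> p q; rewrite /E adj_sym; case: (p \in S); case: (q \in S).
have E2 : forall p q, E p q -> [&& p \in S, q \in S & adj p q] by [].
have E3 : exists f : H -> H, (forall p, f p \in S) /\
        (forall p q, adj p q -> E (f p) (f q)).
  exists s; split => [p | p q Hpq]; first by apply: imset_f; rewrite inE.
  by rewrite /E !imset_f ?inE // hs.
have [HS _] := Hc S E E1 E2 E3.
have /imset_injP inj : #|s @: [set: H]| == #|[set: H]| by rewrite -/S HS.
by move=> x y; apply: inj; rewrite inE.
Qed.

Lemma hom_iter (H : graph) (s : H -> H) n : hom s -> hom (iter n s).
Proof. by move=> hs; elim: n => [//|n IH] x y /IH /hs. Qed.

Definition PP (H : graph) := {p : H * H | p.1 != p.2}.

Lemma proj_gadget (H : graph) (a b : H) : a != b -> is_core H -> projective H ->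
  (exists (F : graph) (u v : F),
      (forall x y : H, x != y ->
         exists f : F -> H, hom f /\ f u = x /\ f v = y) /\
      (forall f : F -> H, hom f -> f u != f v)).
Proof.
move=> Hab Hc Hp.
pose N := #|{: PP H}|.
pose u : graph_pow H N := [ffun i => (val (enum_val i)).1].
pose v : graph_pow H N := [ffun i => (val (enum_val i)).2].
exists (graph_pow H N), u, v; split.
  move=> x y Hxy.
  exists (fun w : graph_pow H N => w (enum_rank (exist _ (x, y) Hxy : PP H))).
  split; first by move=> p q /forallP; apply.
  by rewrite /u /v !ffunE enum_rankK.
move=> f hf; apply/negP => /eqP Euv.
pose s := fun x : H => f [ffun => x].
have hs : hom s.
  by move=> x y Hxy; apply: hf; apply/forallP => i; rewrite !ffunE.
have sinj := core_endo_inj Hc hs.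
pose p := perm sinj.
pose k := #[p]%g.
pose f' := fun w : graph_pow H N => iter k.-1 s (f w).
have hf' : hom f' by move=> x y /hf /(hom_iter k.-1 hs).
have idf' : forall x : H, f' [ffun => x] = x.
  move=> x; rewrite /f' -/(s x) -iterSr prednK ?order_gt0 //.
  by rewrite -(eq_iter (permE sinj)) -permX expg_order perm1.
have m2 : 1 < N.
  apply/card_gt1P.
  have Hba : b != a by rewrite eq_sym.
  exists (exist _ (a, b) Hab), (exist _ (b, a) Hba); split => //.
  apply/eqP => /(congr1 val) [] E; by rewrite E eqxx in Hab.
case: (Hp N m2 f' (conj hf' idf')) => i Hi.
have : f' u = f' v by rewrite /f' Euv.
rewrite !Hi /u /v !ffunE => /eqP.
by rewrite (negbTE (valP (enum_val i))).
Qed.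

Theorem proposition12 (H : graph) :
  connected H -> is_core H -> ~ trivial_graph H ->
  ((exists (F : graph) (u v : F),
      (forall x y : H, x != y ->
         exists f : F -> H, hom f /\ f u = x /\ f v = y) /\
      (forall f : F -> H, hom f -> f u != f v))
   <-> projective H).
Proof.
move=> Hconn Hc Hnt.
have [a [b [c [Hab Hbc Hac]]]] := three_vertices Hconn Hc Hnt.
by split; [exact: gadget_proj Hab Hbc Hac | exact: proj_gadget Hab Hc].
Qed.
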